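(* Let $N\ge2$, $M\ge1$, $q_1,\dots,q_N>0$, and let each $J_k:\mathbb{R}^M\to\mathbb{R}$ be convex and differentiable, with $\sum_{k=1}^Nq_kJ_k$ strongly convex with unique minimizer $w^\star$, and suppose $\sum_{k=1}^NJ_k$ is strongly convex. Let $A$ be primitive, left-stochastic and balanced with Perron vector $p$, and let $\mu_1,\dots,\mu_N>0$ satisfy $q=\beta\,\mathrm{diag}\{\mu_1,\dots,\mu_N\}p$ for some $\beta>0$. Then there exists a unique pair $(\mathcal{W}^\star,\mathcal{Y}^\star_o)\in\mathbb{R}^{NM}\times\mathbb{R}^{NM}$ with $\mathcal{Y}^\star_o$ in the range of $\mathcal{V}$ such that $$\bar{\mathcal{A}}^{\mathsf T}\mathcal{M}\nabla\mathcal{J}^o(\mathcal{W}^\star)+\mathcal{P}^{-1}\mathcal{V}\mathcal{Y}^\star_o=0,\qquad \mathcal{V}\mathcal{W}^\star=0 .$$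
   Context: $A=[a_{\ell k}]\in\mathbb{R}^{N\times N}$ is nonnegative, left-stochastic ($A^{\mathsf T}\mathbf{1}_N=\mathbf{1}_N$) and primitive, with Perron vector $p$: $Ap=p$, $\mathbf{1}_N^{\mathsf T}p=1$, $p\succ0$; $P=\mathrm{diag}(p)$, balanced means $PA^{\mathsf T}=AP$. $q=(q_1,\dots,q_N)^{\mathsf T}$, $\bar A=(I_N+A)/2$. The symmetric positive semidefinite matrix $(P-AP)/2$ has eigendecomposition $U\Sigma U^{\mathsf T}$ and $V=U\Sigma^{1/2}U^{\mathsf T}$. $\bar{\mathcal{A}}=\bar A\otimes I_M$, $\mathcal{P}=P\otimes I_M$, $\mathcal{V}=V\otimes I_M$, $\mathcal{M}=\mathrm{diag}\{\mu_1I_M,\dots,\mu_NI_M\}$, and $\nabla\mathcal{J}^o(\mathcal{W})=\mathrm{col}\{\nabla J_1(w_1),\dots,\nabla J_N(w_N)\}$ for $\mathcal{W}=\mathrm{col}\{w_1,\dots,w_N\}$. *)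

(* Defs.v *)
From HB Require Import structures.
From mathcomp Require Import all_boot all_order all_algebra.
From mathcomp Require Import all_classical all_reals all_analysis.
Set Implicit Arguments. Unset Strict Implicit. Unset Printing Implicit Defensive.
Import Order.TTheory GRing.Theory Num.Theory.
Import numFieldNormedType.Exports.
Local Open Scope ring_scope.

Definition sqnorm (R : realType) (M : nat) (x : 'rV[R]_M) : R :=
  \sum_(i < M) x 0 i ^+ 2.

Definition convex_fun (R : realType) (M : nat) (J : 'rV[R]_M -> R) : Prop :=
  forall (x y : 'rV[R]_M) (t : R), 0 <= t -> t <= 1 ->
    J (t *: x + (1 - t) *: y) <= t * J x + (1 - t) * J y.

Definition strongly_convex (R : realType) (M : nat) (J : 'rV[R]_M -> R) : Prop :=
  exists nu : R, 0 < nu /\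
  forall (x y : 'rV[R]_M) (t : R), 0 <= t -> t <= 1 ->
    J (t *: x + (1 - t) *: y) <=
      t * J x + (1 - t) * J y - nu / 2 * t * (1 - t) * sqnorm (x - y).

Definition grad (R : realType) (M : nat) (J : 'rV[R]_M -> R) (w : 'rV[R]_M)
  : 'rV[R]_M := \row_(i < M) ('d J w) (delta_mx 0 i).

Definition mxpow (R : realType) (N : nat) (A : 'M[R]_N) (k : nat) : 'M[R]_N :=
  iter k (mulmx A) 1%:M.

Definition nonneg_mx (R : realType) (N : nat) (A : 'M[R]_N) : Prop :=
  forall i j, 0 <= A i j.

Definition left_stochastic (R : realType) (N : nat) (A : 'M[R]_N) : Prop :=
  nonneg_mx A /\ A^T *m const_mx 1 = (const_mx 1 : 'cV[R]_N).

Definition primitive_mx (R : realType) (N : nat) (A : 'M[R]_N) : Prop :=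
  nonneg_mx A /\ exists k : nat, forall i j, 0 < mxpow A k i j.

Definition perron_vector (R : realType) (N : nat) (A : 'M[R]_N) (p : 'cV[R]_N)
  : Prop :=
  A *m p = p /\ \sum_(i < N) p i 0 = 1 /\ forall i, 0 < p i 0.

Definition Pmat (R : realType) (N : nat) (p : 'cV[R]_N) : 'M[R]_N := diag_mx p^T.

Definition balanced (R : realType) (N : nat) (A : 'M[R]_N) (p : 'cV[R]_N) : Prop :=
  Pmat p *m A^T = A *m Pmat p.

Definition Abar (R : realType) (N : nat) (A : 'M[R]_N) : 'M[R]_N :=
  2^-1 *: (1%:M + A).

(* Stacked vectors col{w_1,...,w_N} of R^{NM} are represented as N x M matrices
   whose k-th row is w_k.  Under this identification, (X (x) I_M) W is X *m W. *)

Definition gradJo (R : realType) (N M : nat) (J : 'I_N -> 'rV[R]_M -> R)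
  (W : 'M[R]_(N, M)) : 'M[R]_(N, M) :=
  \matrix_(k < N, i < M) grad (J k) (row k W) 0 i.

(* Main.v *)
Require Import Defs.
From HB Require Import structures.
From mathcomp Require Import all_boot all_order all_algebra.
From mathcomp Require Import all_classical all_reals all_analysis.
From mathcomp Require Import ring lra.
Import Order.TTheory GRing.Theory Num.Theory.
Import numFieldNormedType.Exports.
Local Open Scope ring_scope.
Lemma dir_le (R : realType) (M : nat) (f : 'rV[R]_M -> R) x v c :
  derivable f x v ->
  (forall t : R, 0 < t -> t <= 1 -> t^-1 * (f (t *: v + x) - f x) <= c) ->
  'D_v f x <= c.
Proof.
move=> df H; have := cvg_dnbhs_at_right df.
move=> /cvgr_to_le; apply; near=> t; apply: H.
  by near: t; exact: nbhs_right_gt.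
by near: t; exact: nbhs_right_le.
Unshelve. all: by end_near.
Qed.

Lemma dir_ge (R : realType) (M : nat) (f : 'rV[R]_M -> R) x v c :
  derivable f x v ->
  (forall t : R, 0 < t -> t <= 1 -> c <= t^-1 * (f (t *: v + x) - f x)) ->
  c <= 'D_v f x.
Proof.
move=> df H; have := cvg_dnbhs_at_right df.
move=> /cvgr_to_ge; apply; near=> t; apply: H.
  by near: t; exact: nbhs_right_gt.
by near: t; exact: nbhs_right_le.
Unshelve. all: by end_near.
Qed.

Section Anal.
Variables (R : realType) (M N : nat) (q : 'I_N -> R) (J : 'I_N -> 'rV[R]_M -> R).
Hypothesis qpos : forall k, 0 < q k.
Hypothesis Jcvx : forall k, convex_fun (J k).
Hypothesis Jdiff : forall k w, differentiable (J k) w.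

Lemma dgrad (f : 'rV[R]_M -> R) w v :
  'd f w v = \sum_(i < M) v 0 i * grad f w 0 i.
Proof.
rewrite {1}(row_sum_delta v) linear_sum; apply: eq_bigr => i _.
by rewrite linearZ /= /grad mxE.
Qed.

Lemma dsum w v : \sum_(k < N) q k * 'd (J k) w v =
  \sum_(i < M) v 0 i * \sum_(k < N) q k * grad (J k) w 0 i.
Proof.
under eq_bigr do rewrite dgrad mulr_sumr.
rewrite exchange_big; apply: eq_bigr => i _; rewrite mulr_sumr.
by apply: eq_bigr => k _; rewrite mulrCA.
Qed.

Lemma cvx_ineq k w y : 'd (J k) w (y - w) <= J k y - J k w.
Proof.
rewrite -deriveE //; apply: dir_le; first exact: diff_derivable.
move=> t t0 t1.
have := Jcvx k y w t (ltW t0) t1.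
have -> : t *: y + (1 - t) *: w = t *: (y - w) + w.
  by rewrite scalerBl scale1r scalerBr addrA addrAC.
move=> h; rewrite -(ler_pM2l t0) mulrA mulfV ?gt_eqF // mul1r.
lra.
Qed.

Lemma min_grad w : (forall y, \sum_k q k * J k w <= \sum_k q k * J k y) ->
  forall i, \sum_k q k * grad (J k) w 0 i = 0.
Proof.
move=> wmin.
set c := \row_i \sum_k q k * grad (J k) w 0 i.
have key v : 0 <= \sum_k q k * 'd (J k) w v.
  pose h := fun k => q k \*: J k.
  have dh k : derivable (h k) w v by apply: derivableZ; exact: diff_derivable.
  have : 0 <= 'D_v (\sum_(k < N) h k) w.
    apply: dir_ge; first exact: derivable_sum.
    move=> t t0 t1; rewrite !fct_sumE; apply: mulr_ge0.
      by rewrite invr_ge0 ltW.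
    by rewrite subr_ge0 /h; apply: wmin.
  rewrite derive_sum // => H; apply: le_trans H _; rewrite le_eqVlt; apply/orP; left; apply/eqP; apply: eq_bigr => k _.
  by rewrite /h deriveZ ?deriveE //; exact: diff_derivable.
have := key (- c); rewrite dsum.
under eq_bigr do rewrite mxE mulNr.
rewrite sumrN oppr_ge0 => hle.
have E i : \sum_k q k * grad (J k) w 0 i = c 0 i by rewrite mxE.
rewrite (eq_bigr (fun i => c 0 i * c 0 i)) in hle; last by move=> i _; rewrite E.
have : \sum_(i < M) c 0 i * c 0 i = 0.
  apply/eqP; rewrite eq_le hle sumr_ge0 // => i _; by rewrite -expr2 sqr_ge0.
move=> /eqP; rewrite psumr_eq0 => [/allP H i|i _]; last by rewrite -expr2 sqr_ge0.
have := H i (mem_index_enum i); rewrite -expr2 sqrf_eq0 -E => /eqP //.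
Qed.

Lemma grad_min w : (forall i, \sum_k q k * grad (J k) w 0 i = 0) ->
  forall y, \sum_k q k * J k w <= \sum_k q k * J k y.
Proof.
move=> g0 y; rewrite -subr_ge0 -sumrB.
apply: le_trans (_ : \sum_k q k * 'd (J k) w (y - w) <= _).
  rewrite dsum; rewrite big1 // => i _; by rewrite g0 mulr0.
apply: ler_sum => k _; rewrite -mulrBr; apply: ler_wpM2l; first exact: ltW.
exact: cvx_ineq.
Qed.
End Anal.

Set Implicit Arguments. Unset Strict Implicit. Unset Printing Implicit Defensive.
Lemma zero_arg (R : realType) N (B : 'M[R]_N) (z : 'cV[R]_N) :
  (forall i j, 0 < B i j) -> (forall j, \sum_i B i j = 1) ->
  B *m z = z -> \sum_i z i 0 = 0 -> z = 0.
Proof.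
move=> Bpos Bcol Bz z0.
suff zle : forall i, z i 0 <= 0.
  have : \sum_i (- z i 0) = 0 by rewrite sumrN z0 oppr0.
  move=> /eqP; rewrite psumr_eq0 => [/allP H|i _]; last by rewrite oppr_ge0.
  apply/matrixP => i j; rewrite (ord1 j) mxE.
  by have := H i (mem_index_enum i); rewrite oppr_eq0 => /eqP.
move=> i; rewrite leNgt; apply/negP => zi.
pose zp l := Num.max (z l 0) 0.
have zp0 l : 0 <= zp l by rewrite le_max lexx orbT.
have h1 l : zp l <= \sum_m B l m * zp m.
  rewrite ge_max; apply/andP; split; last first.
    by apply: sumr_ge0 => m _; apply: mulr_ge0 => //; exact: ltW.
  have -> : z l 0 = \sum_m B l m * z m 0 by rewrite -{1}Bz mxE.
  apply: ler_sum => m _; apply: ler_wpM2l; first exact: ltW.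
  by rewrite le_max lexx.
have [i0 zi0] : exists i0, z i0 0 <= 0.
  apply/not_existsP => H.
  have : 0 < \sum_l z l 0.
    rewrite (bigD1 i) //=; apply: ltr_pwDl => //.
    apply: sumr_ge0 => l _; have := H l; rewrite leNgt => /negP/negbNE/ltW //.
  by rewrite z0 ltxx.
have zpi0 : zp i0 = 0 by apply/eqP; rewrite eq_le zp0 andbT ge_max zi0 lexx.
have zpi : zp i = z i 0 by rewrite /zp max_l // ltW.
have hlt : \sum_l zp l < \sum_l \sum_m B l m * zp m.
  rewrite (bigD1 i0) //= [X in _ < X](bigD1 i0) //=.
  apply: ltr_leD; last by apply: ler_sum => l _; exact: h1.
  rewrite zpi0; apply: lt_le_trans (_ : B i0 i * zp i <= _).
    by apply: mulr_gt0 => //; rewrite zpi.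
  rewrite (bigD1 i) //= lerDl; apply: sumr_ge0 => m _.
  by apply: mulr_ge0 => //; exact: ltW.
move: hlt; rewrite exchange_big /=.
rewrite [X in _ < X](eq_bigr (fun m => zp m)) ?ltxx // => m _.
by rewrite -mulr_suml Bcol mul1r.
Qed.

Lemma mxpowS (R : realType) N (A : 'M[R]_N) k : mxpow A k.+1 = A *m mxpow A k.
Proof. by []. Qed.

Lemma mxpow_col (R : realType) N (A : 'M[R]_N) k :
  A^T *m const_mx 1 = const_mx 1 :> 'cV_N ->
  (mxpow A k)^T *m const_mx 1 = const_mx 1 :> 'cV_N.
Proof.
move=> Acol; elim: k => [|k IH]; first by rewrite /mxpow /= trmx1 mul1mx.
by rewrite mxpowS trmx_mul -mulmxA Acol.
Qed.

Lemma mxpow_fix (R : realType) N (A : 'M[R]_N) k (z : 'cV[R]_N) :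
  A *m z = z -> mxpow A k *m z = z.
Proof.
move=> Az; elim: k => [|k IH]; first by rewrite /mxpow /= mul1mx.
by rewrite mxpowS -mulmxA IH.
Qed.

Lemma perron_unique (R : realType) N (A : 'M[R]_N) (p y : 'cV[R]_N) :
  primitive_mx A -> left_stochastic A -> perron_vector A p ->
  A *m y = y -> y = (\sum_i y i 0) *: p.
Proof.
case=> _ [k Bpos]; case=> _ Acol; case=> Ap [psum _] Ay.
set c := \sum_i y i 0.
suff : y - c *: p = 0 by move/eqP; rewrite subr_eq0 => /eqP.
have Az : A *m (y - c *: p) = y - c *: p by rewrite mulmxBr -scalemxAr Ap Ay.
apply: (@zero_arg _ _ (mxpow A k)) => //.
- have H := @mxpow_col _ _ A k Acol.
  move=> j; have := congr1 (fun m : 'cV[R]_N => m j 0) H; rewrite !mxE => <-.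
  by apply: eq_bigr => i _; rewrite !mxE mulr1.
- exact: mxpow_fix.
- under eq_bigr do rewrite !mxE.
  by rewrite sumrB -mulr_sumr psum mulr1 subrr.
Qed.

Definition Smat (R : realType) N (A : 'M[R]_N) (p : 'cV[R]_N) : 'M[R]_N :=
  2^-1 *: (Pmat p - A *m Pmat p).

Lemma Pmat_mul (R : realType) N M' (p : 'cV[R]_N) (X : 'M[R]_(N, M')) i j :
  (Pmat p *m X) i j = p i 0 * X i j.
Proof. by rewrite /Pmat mul_diag_mx !mxE. Qed.

Lemma nullS (R : realType) N M' (A : 'M[R]_N) (p : 'cV[R]_N) (X : 'M[R]_(N, M')) :
  primitive_mx A -> left_stochastic A -> perron_vector A p ->
  Smat A p *m X = 0 -> forall i i' j, X i j = X i' j.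
Proof.
move=> Apr Ast Ap SX.
have PX : A *m (Pmat p *m X) = Pmat p *m X.
  move/eqP: SX; rewrite /Smat -scalemxAl scaler_eq0 invr_eq0 pnatr_eq0 /=.
  by rewrite mulmxBl subr_eq0 -mulmxA => /eqP.
have ppos := Ap.2.2.
suff H : forall j, exists c, forall i, X i j = c.
  by move=> i i' j; have [c Hc] := H j; rewrite !Hc.
move=> j; set y := col j (Pmat p *m X).
have Ay : A *m y = y by rewrite /y !colE mulmxA PX.
have Ey := perron_unique Apr Ast Ap Ay.
exists (\sum_i y i 0) => i.
have := congr1 (fun m : 'cV[R]_N => m i 0) Ey; rewrite /= [in X in X = _]mxE.
rewrite Pmat_mul mxE [_ * p i 0]mulrC => /mulfI; apply.
by rewrite gt_eqF.
Qed.

Lemma V_sym (R : realType) N (U : 'M[R]_N) (sigma : 'rV[R]_N) (V : 'M[R]_N) :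
  V = U *m diag_mx (map_mx Num.sqrt sigma) *m U^T -> V^T = V.
Proof. by move=> ->; rewrite !trmx_mul trmxK tr_diag_mx mulmxA. Qed.

Lemma VV (R : realType) N (A : 'M[R]_N) (p : 'cV[R]_N)
  (U : 'M[R]_N) (sigma : 'rV[R]_N) (V : 'M[R]_N) :
  U^T *m U = 1%:M -> (forall i, 0 <= sigma 0 i) ->
  2^-1 *: (Pmat p - A *m Pmat p) = U *m diag_mx sigma *m U^T ->
  V = U *m diag_mx (map_mx Num.sqrt sigma) *m U^T -> V *m V = Smat A p.
Proof.
move=> HU Hs HS HV; rewrite /Smat HS HV.
rewrite !mulmxA -[U *m _ *m U^T *m U]mulmxA HU mulmx1 -[U *m _ *m _]mulmxA mulmx_diag.
congr (_ *m _ *m _); congr diag_mx; apply/matrixP => i j.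
by rewrite !mxE (ord1 i) -expr2 sqr_sqrtr.
Qed.

Lemma SV0 (R : realType) N M' (S V : 'M[R]_N) (X : 'M[R]_(N, M')) :
  V^T = V -> V *m V = S -> S *m X = 0 -> V *m X = 0.
Proof.
move=> Vs VVS SX; set Y := V *m X.
have YY : Y^T *m Y = 0.
  by rewrite /Y trmx_mul Vs -mulmxA [V *m (V *m X)]mulmxA VVS SX mulmx0.
apply/matrixP => i j; rewrite [RHS]mxE.
have := congr1 (fun m : 'M[R]_M' => m j j) YY; rewrite !mxE.
move=> /eqP; rewrite psumr_eq0 => [/allP H|k _]; last first.
  by rewrite mxE -expr2 sqr_ge0.
by have := H i (mem_index_enum i); rewrite mxE -expr2 sqrf_eq0 /= /Y mxE => /eqP.
Qed.

Lemma range_V (R : realType) N M' (A : 'M[R]_N) (p : 'cV[R]_N)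
  (U : 'M[R]_N) (sigma : 'rV[R]_N) (V : 'M[R]_N) (b : 'M[R]_(N, M')) :
  primitive_mx A -> left_stochastic A -> perron_vector A p ->
  U^T *m U = 1%:M -> (forall i, 0 <= sigma 0 i) ->
  2^-1 *: (Pmat p - A *m Pmat p) = U *m diag_mx sigma *m U^T ->
  V = U *m diag_mx (map_mx Num.sqrt sigma) *m U^T ->
  (forall j, \sum_k b k j = 0) ->
  exists Z, V *m (V *m Z) = b.
Proof.
move=> Apr Ast Ap HU Hs HS HV b0.
have UUt : U *m U^T = 1%:M by apply: mulmx1C.
exists (U *m diag_mx (map_mx GRing.inv sigma) *m U^T *m b).
rewrite mulmxA (VV HU Hs HS HV) /Smat HS.
rewrite !mulmxA -[U *m _ *m U^T *m U]mulmxA HU mulmx1 -[U *m _ *m _]mulmxA mulmx_diag.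
rewrite -!mulmxA.
suff E : diag_mx (\row_j (sigma 0 j * (map_mx GRing.inv sigma) 0 j)) *m (U^T *m b)
    = U^T *m b by rewrite E mulmxA UUt mul1mx.
apply/matrixP => i j; rewrite mul_diag_mx !mxE.
have [s0|sn0] := eqVneq (sigma 0 i) 0; last by rewrite mulfV // mul1r.
rewrite s0 !mul0r; apply/esym.
set u := col i U.
have Su : Smat A p *m u = 0.
  rewrite /Smat HS /u colE -!mulmxA [U^T *m (U *m _)]mulmxA HU mul1mx.
  rewrite [X in U *m X](_ : _ = 0) ?mulmx0 //.
  apply/matrixP => k' l'; rewrite mul_diag_mx !mxE.
  by have [->|] := eqVneq k' i; rewrite ?s0 ?mul0r // mulr0.
have uc := nullS Apr Ast Ap Su.
rewrite (eq_bigr (fun k => U i i * b k j)).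
  by rewrite -mulr_sumr b0 mulr0.
move=> k _; rewrite mxE.
by have := uc k i 0; rewrite /u !mxE => ->.
Qed.

Lemma Pmat_const (R : realType) N (p : 'cV[R]_N) :
  Pmat p *m const_mx 1 = p.
Proof. by apply/matrixP => i j; rewrite Pmat_mul mxE mulr1 (ord1 j). Qed.

Lemma S_const (R : realType) N M' (A : 'M[R]_N) (p : 'cV[R]_N) (w : 'M[R]_(1, M')) :
  A *m p = p -> Smat A p *m (const_mx 1 *m w) = 0.
Proof.
move=> Ap; rewrite /Smat -scalemxAl mulmxBl !mulmxA Pmat_const.
by rewrite -[A *m Pmat p *m _]mulmxA Pmat_const Ap subrr scaler0.
Qed.

Lemma row_const (R : realType) N M' (w : 'M[R]_(1, M')) k :
  row k (const_mx 1 *m w : 'M[R]_(N, M')) = w.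
Proof. by apply/matrixP => i j; rewrite (ord1 i) !mxE big_ord1 !mxE mul1r. Qed.

Lemma Pmat_unit (R : realType) N (p : 'cV[R]_N) :
  (forall i, 0 < p i 0) -> Pmat p \in unitmx.
Proof.
move=> pp; rewrite unitmxE det_diag unitfE.
by apply/prodf_neq0 => i _; rewrite mxE gt_eqF.
Qed.

Lemma ones_A (R : realType) N (A : 'M[R]_N) :
  A^T *m const_mx 1 = const_mx 1 :> 'cV[R]_N -> const_mx 1 *m A = const_mx 1 :> 'rV[R]_N.
Proof.
move=> H; apply: trmx_inj; rewrite trmx_mul.
by rewrite [X in _ *m X]trmx_const H trmx_const.
Qed.

Lemma ones_Abar (R : realType) N (A : 'M[R]_N) :
  A^T *m const_mx 1 = const_mx 1 :> 'cV[R]_N -> const_mx 1 *m Abar A = const_mx 1 :> 'rV[R]_N.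
Proof.
move=> H; rewrite /Abar -scalemxAr mulmxDr mulmx1 ones_A //.
apply/matrixP => i j; rewrite !mxE.
have h2 : (2 : R) != 0 by rewrite pnatr_eq0.
by rewrite -[1 + 1]/(1 *+ 2) -[1 *+ 2]/(2%:R) mulVf.
Qed.

Lemma keyid (R : realType) N M' (A : 'M[R]_N) (p q mu : 'cV[R]_N) (beta : R)
  (G : 'M[R]_(N, M')) j :
  left_stochastic A -> balanced A p ->
  q = beta *: (diag_mx mu^T *m p) ->
  beta * ((const_mx 1 : 'rV[R]_N) *m (Pmat p *m ((Abar A)^T *m (diag_mx mu^T *m G)))) 0 j
  = \sum_k q k 0 * G k j.
Proof.
case=> _ Acol Abal qE.
have PAb : Pmat p *m (Abar A)^T = Abar A *m Pmat p.
  rewrite /Abar linearZ /= linearD /= trmx1 -!scalemxAr -scalemxAl.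
  by rewrite mulmxDr mulmx1 Abal mulmxDl mul1mx.
rewrite [Pmat p *m _]mulmxA PAb -mulmxA mulmxA ones_Abar // mxE mulr_sumr.
apply: eq_bigr => k _; rewrite qE Pmat_mul !mul_diag_mx !mxE mul1r.
by ring.
Qed.

Unset Implicit Arguments. Set Strict Implicit.
Theorem lemma3 (R : realType) (N M : nat)
  (q : 'cV[R]_N) (J : 'I_N -> 'rV[R]_M -> R)
  (A : 'M[R]_N) (p : 'cV[R]_N) (mu : 'cV[R]_N) (beta : R)
  (U : 'M[R]_N) (sigma : 'rV[R]_N) (V : 'M[R]_N) :
  (2 <= N)%N -> (1 <= M)%N ->
  (forall k, 0 < q k 0) ->
  (forall k, convex_fun (J k)) ->
  (forall k w, differentiable (J k) w) ->
  strongly_convex (fun w => \sum_(k < N) q k 0 * J k w) ->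
  (exists wstar : 'rV[R]_M,
      (forall w, \sum_(k < N) q k 0 * J k wstar <= \sum_(k < N) q k 0 * J k w) /\
      (forall w', (forall w, \sum_(k < N) q k 0 * J k w' <= \sum_(k < N) q k 0 * J k w)
                  -> w' = wstar)) ->
  strongly_convex (fun w => \sum_(k < N) J k w) ->
  primitive_mx A -> left_stochastic A -> perron_vector A p -> balanced A p ->
  (forall k, 0 < mu k 0) -> 0 < beta ->
  q = beta *: (diag_mx mu^T *m p) ->
  (* eigendecomposition (P - A P)/2 = U Sigma U^T, V = U Sigma^{1/2} U^T *)
  U^T *m U = 1%:M ->
  (forall i, 0 <= sigma 0 i) ->
  2^-1 *: (Pmat p - A *m Pmat p) = U *m diag_mx sigma *m U^T ->
  V = U *m diag_mx (map_mx Num.sqrt sigma) *m U^T ->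
  exists W : 'M[R]_(N, M), exists Y : 'M[R]_(N, M),
    ((exists Z : 'M[R]_(N, M), Y = V *m Z) /\
     (Abar A)^T *m (diag_mx mu^T *m gradJo J W) + invmx (Pmat p) *m (V *m Y) = 0 /\
     V *m W = 0) /\
    forall W' Y' : 'M[R]_(N, M),
      (exists Z : 'M[R]_(N, M), Y' = V *m Z) ->
      (Abar A)^T *m (diag_mx mu^T *m gradJo J W') + invmx (Pmat p) *m (V *m Y') = 0 ->
      V *m W' = 0 ->
      W' = W /\ Y' = Y.
Proof.
move=> N2 M1 qpos Jcvx Jdiff _ [ws [wsmin wsuniq]] _ Apr Ast Ap Abal mupos bpos
  qE HU Hs HS HV.
have Vs := V_sym HV.
have VVS := VV HU Hs HS HV.
have S0 : forall M' (X : 'M[R]_(N, M')), Smat A p *m X = 0 -> V *m X = 0.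
  by move=> M' X; apply: SV0.
have Punit := Pmat_unit Ap.2.2.
have onesV : (const_mx 1 : 'rV[R]_N) *m V = 0.
  apply: trmx_inj; rewrite trmx_mul Vs trmx_const trmx0.
  have -> : (const_mx 1 : 'cV[R]_N) = const_mx 1 *m (const_mx 1 : 'M[R]_1).
    by apply/matrixP => i j; rewrite !mxE big_ord1 !mxE mulr1.
  by apply: S0; apply: S_const; exact: Ap.1.
have qpos' : forall k, 0 < (fun k => q k 0) k by [].
have gmin := @min_grad R M N (fun k => q k 0) J Jdiff.
have mgrad := @grad_min R M N (fun k => q k 0) J qpos Jcvx Jdiff.
pose W0 : 'M[R]_(N, M) := const_mx 1 *m ws.
have G0E : forall k i, gradJo J W0 k i = grad (J k) ws 0 i.
  by move=> k i; rewrite mxE row_const.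
pose T0 := (Abar A)^T *m (diag_mx mu^T *m gradJo J W0).
pose b := - (Pmat p *m T0).
have b0 : forall j, \sum_k b k j = 0.
  move=> j.
  have := keyid (gradJo J W0) j Ast Abal qE.
  under [RHS]eq_bigr do rewrite G0E.
  rewrite gmin // => /eqP; rewrite mulf_eq0 gt_eqF //= => /eqP H.
  rewrite (eq_bigr (fun k => - (Pmat p *m T0) k j)); last by move=> k _; rewrite mxE.
  rewrite sumrN; apply/eqP; rewrite oppr_eq0; apply/eqP; rewrite -[RHS]H mxE.
  by apply: eq_bigr => k _; rewrite !mxE mul1r.
have [Z0 HZ0] := range_V Apr Ast Ap HU Hs HS HV b0.
have eq0 : T0 + invmx (Pmat p) *m (V *m (V *m Z0)) = 0.
  by rewrite HZ0 /b mulmxN mulKmx // subrr.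
exists W0, (V *m Z0); split.
  split; first by exists Z0.
  split; first exact: eq0.
  by apply: S0; apply: S_const; exact: Ap.1.
move=> W' Y' [Z' ->] eq' VW'.
have SW' : Smat A p *m W' = 0 by rewrite -VVS -mulmxA VW' mulmx0.
have rows := nullS Apr Ast Ap SW'.
have i0 : 'I_N := Ordinal (leq_trans (isT : (0 < 2)%N) N2).
set w' := row i0 W'.
have W'E : W' = const_mx 1 *m w'.
  by apply/matrixP => k i; rewrite !mxE big_ord1 !mxE mul1r (rows k i0 i).
have Ew' : w' = ws.
  apply: wsuniq; apply: mgrad => j.
  have := congr1 (fun m => (const_mx 1 : 'rV[R]_N) *m (Pmat p *m m)) eq'.
  rewrite /= !mulmx0 !mulmxDr mulKVmx // [const_mx 1 *m (V *m _)]mulmxA onesV mul0mx addr0 => H.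
  have := keyid (gradJo J W') j Ast Abal qE; rewrite H mxE mulr0 => /esym.
  move=> E; rewrite -[RHS]E; apply: eq_bigr => k _; rewrite !mxE.
  by rewrite W'E row_const.
have W'W0 : W' = W0 by rewrite W'E Ew'.
rewrite W'W0 in eq' *; split => //.
have VY : V *m (V *m Z') = V *m (V *m Z0).
  have := eq'; rewrite -eq0 => /addrI /(congr1 (mulmx (Pmat p))).
  by rewrite !mulKVmx.
have : V *m (V *m (Z' - Z0)) = 0 by rewrite !mulmxBr VY subrr.
rewrite mulmxA VVS => /S0; rewrite mulmxBr => /eqP; rewrite subr_eq0 => /eqP.
by [].
Qed.
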